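(* Let $f(p):=D(a_0,\ldots,a_n;p)$ be an optimal penalty function, i.e. one minimizing the sup-norm $\|D(a_0,\ldots,a_n;\cdot)\|_\infty$ over all choices $a_0,\ldots,a_n\in[0,1]$ (no ordering of the $a_i$ is assumed), and let $M(f):=\{x\in[0,1]: f(x)=\|f\|_\infty\}$ be its set of absolute maxima. Then: (i) $M(f)\cap\{a_0,\ldots,a_n\}=\emptyset$; (ii) $M(f)\cap[0,\min_i a_i)\neq\emptyset$ and $M(f)\cap(\max_i a_i,1]\neq\emptyset$; (iii) $a_0\le 1/2\le a_n$ and $M(f)\cap(a_0,a_n)\neq\emptyset$.
   Context: For an integer $n\ge1$ and $a_0,\ldots,a_n\in[0,1]$ (where $a_k$ is the estimate of the heads-probability $p$ of a biased coin when $k$ heads are observed in $n$ tosses), the penalty (risk) function is $D(a_0,\ldots,a_n;p)=\sum_{k=0}^n \binom{n}{k}p^k(1-p)^{n-k}|p-a_k|$ for $p\in[0,1]$. A choice $a_0,\ldots,a_n$ is called optimal if it minimizes $\|D(a_0,\ldots,a_n;\cdot)\|_\infty$ over $[0,1]$, and the corresponding $D$ is called an optimal penalty function. *)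

(* Defs.v *)
From HB Require Import structures.
From mathcomp Require Import all_boot all_order all_algebra.
From mathcomp Require Import all_classical all_reals.
Set Implicit Arguments. Unset Strict Implicit. Unset Printing Implicit Defensive.
Import Order.TTheory GRing.Theory Num.Theory.
Local Open Scope ring_scope.
Local Open Scope classical_set_scope.

Definition unit_int (R : realType) : set R := [set p | 0 <= p <= 1].

Definition penalty (R : realType) (n : nat) (a : 'I_n.+1 -> R) (p : R) : R :=
  \sum_(k < n.+1) ('C(n, k))%:R * p ^+ k * (1 - p) ^+ (n - k) * `|p - a k|.

Definition supnorm01 (R : realType) (f : R -> R) : R :=
  sup ((fun p => `|f p|) @` @unit_int R).

Definition admissible (R : realType) (n : nat) (a : 'I_n.+1 -> R) : Prop :=
  forall k, 0 <= a k <= 1.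

Definition optimal (R : realType) (n : nat) (a : 'I_n.+1 -> R) : Prop :=
  admissible a /\
  forall b : 'I_n.+1 -> R, admissible b ->
    supnorm01 (penalty a) <= supnorm01 (penalty b).

Definition absmax (R : realType) (f : R -> R) : set R :=
  [set x | @unit_int R x /\ f x = supnorm01 f].

Definition amin (R : realType) (n : nat) (a : 'I_n.+1 -> R) : R :=
  \big[Num.min/a ord0]_(i < n.+1) a i.
Definition amax (R : realType) (n : nat) (a : 'I_n.+1 -> R) : R :=
  \big[Num.max/a ord0]_(i < n.+1) a i.

(* Main.v *)
Require Import Defs.
From HB Require Import structures.
From mathcomp Require Import all_boot all_order all_algebra.
From mathcomp Require Import all_classical all_reals.
From mathcomp Require Import topology normedtype derive realfun.
From mathcomp Require Import ring lra.
Import Order.TTheory GRing.Theory Num.Theory.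
Import numFieldNormedType.Exports.
Local Open Scope ring_scope.
Local Open Scope classical_set_scope.
Set Implicit Arguments. Unset Strict Implicit. Unset Printing Implicit Defensive.
Section Basics.
Variable R : realType.

Definition wt (n k : nat) (p : R) : R := 'C(n, k)%:R * p ^+ k * (1 - p) ^+ (n - k).

Lemma penaltyE n (a : 'I_n.+1 -> R) p :
  penalty a p = \sum_(k < n.+1) wt n k p * `|p - a k|.
Proof. by []. Qed.

Lemma wt_ge0 n k p : 0 <= p <= 1 -> 0 <= wt n k p.
Proof.
move=> /andP[p0 p1]; rewrite /wt !mulr_ge0 ?exprn_ge0 ?ler0n //; lra.
Qed.

Lemma wt_le n k p : 0 <= p <= 1 -> wt n k p <= 'C(n, k)%:R.
Proof.
move=> /andP[p0 p1]; rewrite /wt -mulrA ler_piMr ?ler0n //.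
rewrite mulr_ile1 ?exprn_ge0 ?exprn_ile1 //; lra.
Qed.

Lemma wt_lb n k p : (k <= n)%N -> 0 <= p <= 1 -> p ^+ n * (1 - p) ^+ n <= wt n k p.
Proof.
move=> kn /andP[p0 p1]; rewrite /wt.
have h1 : p ^+ n <= p ^+ k by apply: ler_wiXn2l.
have h2 : (1 - p) ^+ n <= (1 - p) ^+ (n - k) by apply: ler_wiXn2l; rewrite ?leq_subr //; lra.
have hC : 1 <= 'C(n, k)%:R :> R by rewrite ler1n bin_gt0.
rewrite -mulrA; apply: (le_trans _ (ler_peMl _ hC)); last first.
  by rewrite mulr_ge0 ?exprn_ge0 //; lra.
apply: ler_pM; rewrite ?exprn_ge0 //; lra.
Qed.

Lemma wt_gt0 n k p : (k <= n)%N -> 0 < p < 1 -> 0 < wt n k p.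
Proof.
move=> kn /andP[p0 p1]; rewrite /wt !mulr_gt0 ?exprn_gt0 ?ltr0n ?bin_gt0 //; lra.
Qed.

Lemma wt0 n p : wt n 0 p = (1 - p) ^+ n.
Proof. by rewrite /wt bin0 expr0 !mul1r subn0. Qed.

Lemma wtn n p : wt n n p = p ^+ n.
Proof. by rewrite /wt binn subnn expr0 mulr1 mul1r. Qed.

Lemma wt_at0 n k : (0 < k)%N -> wt n k 0 = 0.
Proof. by move=> k0; rewrite /wt expr0n gtn_eqF // mulr0 mul0r. Qed.

Lemma wt_at1 n k : (k < n)%N -> wt n k 1 = 0.
Proof. by move=> kn; rewrite /wt subrr expr0n subn_eq0 leqNgt kn mulr0. Qed.

Lemma wt_sum n p : \sum_(k < n.+1) wt n k p = 1.
Proof.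
have E := exprDn (1 - p) p n; rewrite subrK expr1n in E.
rewrite E; apply: eq_bigr => k _.
rewrite /wt -mulrA mulr_natl; congr (_ *+ _); exact: mulrC.
Qed.

Lemma contM (f g : R -> R) x : {for x, continuous f} -> {for x, continuous g} ->
  {for x, continuous (fun p => f p * g p)}.
Proof. exact: continuousM. Qed.

Lemma contD (f g : R -> R) x : {for x, continuous f} -> {for x, continuous g} ->
  {for x, continuous (fun p => f p + g p)}.
Proof. exact: continuousD. Qed.

Lemma contB (f g : R -> R) x : {for x, continuous f} -> {for x, continuous g} ->
  {for x, continuous (fun p => f p - g p)}.
Proof. exact: continuousB. Qed.

Lemma contC (c : R) x : {for x, continuous (fun _ : R => c)}.
Proof. exact: cvg_cst. Qed.

Lemma contI x : {for x, continuous (fun p : R => p)}.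
Proof. exact: cvg_id. Qed.

Lemma contN (f : R -> R) x : {for x, continuous f} -> {for x, continuous (fun p => `|f p|)}.
Proof. move=> cf; apply: continuous_comp => //; exact: norm_continuous. Qed.

Lemma contX (f : R -> R) x k : {for x, continuous f} ->
  {for x, continuous (fun p => f p ^+ k)}.
Proof.
move=> cf; elim: k => [|k IH].
  have -> : (fun p => f p ^+ 0) = fun=> 1 by apply: funext => p; rewrite expr0.
  exact: cvg_cst.
have -> : (fun p => f p ^+ k.+1) = f \* (fun p => f p ^+ k).
  by apply: funext => p; rewrite exprS.
exact: continuousM.
Qed.

Lemma wt_cont n k : continuous (wt n k).
Proof.
move=> x.
apply: (@contM (fun p => 'C(n,k)%:R * p^+k) (fun p => (1-p)^+(n-k))); first apply: contM; first exact: contC.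
  exact: exprn_continuous.
apply: (@contX (fun p => 1 - p)); apply: contB; [exact: contC|exact: contI].
Qed.

Lemma contS (I : Type) (s : seq I) (F : I -> R -> R) x :
  (forall i, {for x, continuous (F i)}) ->
  {for x, continuous (fun p => \sum_(i <- s) F i p)}.
Proof.
move=> cF; elim: s => [|i s IH].
  have -> : (fun p => \sum_(i <- [::]) F i p) = fun=> 0.
    by apply: funext => p; rewrite big_nil.
  exact: contC.
have -> : (fun p => \sum_(j <- i :: s) F j p) = fun p => F i p + \sum_(j <- s) F j p.
  by apply: funext => p; rewrite big_cons.
exact: contD.
Qed.

Lemma pen_cont n (a : 'I_n.+1 -> R) : continuous (penalty a).
Proof.
move=> x; apply: contS => k; apply: contM; first exact: wt_cont.
by apply: contN; apply: contB; [exact: contI|exact: contC].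
Qed.

Lemma pen_ge0 n (a : 'I_n.+1 -> R) p : unit_int p -> 0 <= penalty a p.
Proof.
move=> /= hp; rewrite penaltyE; apply: sumr_ge0 => k _.
by rewrite mulr_ge0 ?wt_ge0.
Qed.

Lemma sup_att n (a : 'I_n.+1 -> R) : exists2 c, unit_int c &
  supnorm01 (penalty a) = penalty a c /\
  forall p, unit_int p -> penalty a p <= penalty a c.
Proof.
have cw : {within `[0, 1], continuous (penalty a)}.
  by apply: continuous_subspaceT; exact: pen_cont.
have [c c01 cmax] := @EVT_max R (penalty a) 0 1 ler01 cw.
have uc : unit_int c by move: c01; rewrite in_itv.
have hmax : forall p, unit_int p -> penalty a p <= penalty a c.
  by move=> p hp; apply: cmax; rewrite in_itv.
exists c => //; split => //.
apply/eqP; rewrite eq_le; apply/andP; split.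
  apply: ge_sup; first by exists `|penalty a c|, c.
  by move=> _ [p hp <-]; rewrite ger0_norm ?pen_ge0 // hmax.
have -> : penalty a c = `|penalty a c| by rewrite ger0_norm ?pen_ge0.
apply: ub_le_sup; last by exists c.
exists (penalty a c) => _ [p hp <-]; rewrite ger0_norm ?pen_ge0 //; exact: hmax.
Qed.

Lemma improve n (a b : 'I_n.+1 -> R) : optimal a -> admissible b ->
  (forall p, unit_int p -> penalty b p < supnorm01 (penalty a)) -> False.
Proof.
move=> [_ opt] hb hlt; have := opt b hb.
have [c uc [-> _]] := sup_att b.
by move=> /(lt_le_trans (hlt c uc)); rewrite ltxx.
Qed.

Lemma pen_diff n (a b : 'I_n.+1 -> R) p : unit_int p ->
  penalty b p <= penalty a p + \sum_(k < n.+1) 'C(n, k)%:R * `|b k - a k|.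
Proof.
move=> hp; rewrite !penaltyE -big_split /=; apply: ler_sum => k _.
have w0 := wt_ge0 n k hp; have wC := wt_le n k hp.
have t : `|p - b k| <= `|p - a k| + `|b k - a k|.
  have -> : p - b k = (p - a k) + (a k - b k) by ring.
  by rewrite (distrC (b k)); exact: ler_normD.
apply: (le_trans (ler_wpM2l w0 t)); rewrite mulrDr lerD2l.
by apply: ler_wpM2r.
Qed.

Lemma unit_intE : @unit_int R = `[0, 1]%classic.
Proof. by apply/seteqP; split => x /=; rewrite in_itv. Qed.

Definition shift n (a d : 'I_n.+1 -> R) (t : R) := fun k => a k + t * d k.

Lemma cover_contra n (a d : 'I_n.+1 -> R) : optimal a ->
  (forall k, 0 < d k -> a k < 1) -> (forall k, d k < 0 -> 0 < a k) ->
  (forall x, unit_int x -> \forall q \near x & t \near (0:R)^'+,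
      unit_int q -> penalty (shift a d t) q < supnorm01 (penalty a)) -> False.
Proof.
move=> oa dpos dneg loc.
have cK : compact (@unit_int R) by rewrite unit_intE; exact: segment_compact.
have := (proj1 (compact_near_coveringP _) cK) R ((0:R)^'+)
  (fun t q => unit_int q -> penalty (shift a d t) q < supnorm01 (penalty a)) (at_right_proper_filter 0) loc.
move=> hev.
have adm : \forall t \near (0:R)^'+, admissible (shift a d t).
  apply: filter_forall => k.
  have [ak0 ak1] : 0 <= a k /\ a k <= 1 by case: oa => /(_ k) /andP.
  have [dk0|dk0|dk0] := ltgtP (d k) 0.
  - have ak : 0 < a k by exact: dneg.
    near=> t; rewrite /shift; apply/andP; split.
      have : t < a k / (- d k) by near: t; apply: nbhs_right_lt; rewrite divr_gt0 // oppr_gt0.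
      rewrite ltr_pdivlMr ?oppr_gt0 //; have : 0 < t by near: t; exact: nbhs_right_gt.
      nra.
    have : 0 < t by near: t; exact: nbhs_right_gt.
    nra.
  - have ak : a k < 1 by exact: dpos.
    near=> t; rewrite /shift; apply/andP; split.
      have : 0 < t by near: t; exact: nbhs_right_gt.
      nra.
    have : t < (1 - a k) / d k by near: t; apply: nbhs_right_lt; rewrite divr_gt0 // subr_gt0.
    rewrite ltr_pdivlMr //; nra.
  - by near=> t; rewrite /shift dk0 mulr0 addr0 ak0 ak1.
have : \forall t \near (0:R)^'+, False.
  near=> t.
  have ht2 : admissible (shift a d t) by near: t.
  apply: (improve oa ht2) => p hp.
  have ht1 : (@unit_int R) `<=` (fun q => unit_int q -> penalty (shift a d t) q < supnorm01 (penalty a)).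
    by near: t.
  exact: ht1.
by move=> /filter_ex [].
Unshelve. all: end_near.
Qed.

Lemma near_cont (f : R -> R) x e : {for x, continuous f} -> 0 < e ->
  \forall q \near x, `|f x - f q| < e.
Proof. by move=> /cvgrPdist_lt /[apply]. Qed.

Lemma pen_le_sup n (a : 'I_n.+1 -> R) p : unit_int p ->
  penalty a p <= supnorm01 (penalty a).
Proof. by move=> hp; have [c _ [-> hc]] := sup_att a; exact: hc. Qed.

Lemma locA n (a d : 'I_n.+1 -> R) x : unit_int x ->
  penalty a x < supnorm01 (penalty a) ->
  \forall q \near x & t \near (0:R)^'+,
      unit_int q -> penalty (shift a d t) q < supnorm01 (penalty a).
Proof.
move=> ux fx; set m := supnorm01 (penalty a).
set S := \sum_(k < n.+1) 'C(n, k)%:R * `|d k|.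
have S0 : 0 <= S by apply: sumr_ge0 => k _; rewrite mulr_ge0 ?ler0n.
set eta := (m - penalty a x) / 2.
have eta0 : 0 < eta by rewrite divr_gt0 // subr_gt0.
near=> q t => hq.
have tpos : 0 < t by near: t; exact: nbhs_right_gt.
have tS : t * S < eta.
  have : t < eta / (S + 1) by near: t; apply: nbhs_right_lt; rewrite divr_gt0 // ltr_wpDl.
  rewrite ltr_pdivlMr ?ltr_wpDl //; nra.
have fq : `|penalty a x - penalty a q| < eta.
  by near: q; apply: near_cont => //; exact: pen_cont.
have := pen_diff a (shift a d t) hq.
have -> : \sum_(k < n.+1) 'C(n, k)%:R * `|shift a d t k - a k| = t * S.
  rewrite /S mulr_sumr; apply: eq_bigr => k _.
  by rewrite /shift addrC addKr normrM gtr0_norm // mulrCA.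
have he : 2 * eta = m - penalty a x by rewrite /eta; field.
move: fq; rewrite ltr_norml; lra.
Unshelve. all: end_near.
Qed.

Definition sgn_at (x y : R) : R := if y < x then 1 else -1.

Definition psi n (a d : 'I_n.+1 -> R) (x q : R) : R :=
  \sum_(k < n.+1) wt n k q *
     (if a k == x then `|d k| else - (sgn_at x (a k) * d k)).

Lemma term_bound (x q t ak dk : R) : ak != x -> 0 < t ->
  `|x - q| < `|x - ak| / 2 -> t * `|dk| < `|x - ak| / 2 ->
  `|q - (ak + t * dk)| = `|q - ak| + t * (- (sgn_at x ak * dk)).
Proof.
move=> nax t0 hq ht; rewrite /sgn_at.
move: hq; rewrite ltr_norml => /andP[hq1 hq2].
have hd1 := ler_norm dk; have hd2 : - dk <= `|dk| by rewrite -normrN ler_norm.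
have htd1 : t * dk <= t * `|dk| by rewrite ler_wpM2l // ltW.
have htd2 : - (t * dk) <= t * `|dk| by rewrite -mulrN ler_wpM2l // ltW.
case: ltgtP nax => // hax _.
- have hxa : 0 < x - ak by rewrite subr_gt0.
  move: hq1 hq2 ht; rewrite (gtr0_norm hxa) => hq1 hq2 ht.
  rewrite !ger0_norm; lra.
- have hxa : x - ak < 0 by rewrite subr_lt0.
  move: hq1 hq2 ht; rewrite (ltr0_norm hxa) => hq1 hq2 ht.
  rewrite !ler0_norm; lra.
Qed.

Lemma psi_cont n (a d : 'I_n.+1 -> R) x : continuous (psi a d x).
Proof.
move=> y; apply: contS => k; apply: contM; [exact: wt_cont|exact: contC].
Qed.

Lemma locG n (a d : 'I_n.+1 -> R) x : unit_int x -> psi a d x x < 0 ->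
  \forall q \near x & t \near (0:R)^'+,
      unit_int q -> penalty (shift a d t) q < supnorm01 (penalty a).
Proof.
move=> ux px.
have hq : \forall q \near x, forall k : 'I_n.+1, a k != x -> `|x - q| < `|x - a k| / 2.
  apply: (@filter_forall R 'I_n.+1 (fun k (q : R) => a k != x -> `|x - q| < `|x - a k| / 2) (nbhs x)) => k.
  have [->|ne] := eqVneq (a k) x.
    by near=> q.
  have := @near_cont id x (`|x - a k| / 2) (@contI x).
  rewrite divr_gt0 ?normr_gt0 ?subr_eq0 1?eq_sym //= => /(_ isT).
  by apply: filter_app; near=> q => h _.
have ht : \forall t \near (0:R)^'+, forall k : 'I_n.+1, a k != x -> t * `|d k| < `|x - a k| / 2.
  apply: (@filter_forall _ _ _ _ _) => k; have [->|ne] := eqVneq (a k) x.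
    by near=> t.
  have e0 : 0 < `|x - a k| / 2 / (`|d k| + 1).
    by rewrite !divr_gt0 ?ltr_wpDl ?normr_gt0 ?subr_eq0 1?eq_sym.
  near=> t => _.
  have : t < `|x - a k| / 2 / (`|d k| + 1) by near: t; exact: nbhs_right_lt.
  have : 0 < t by near: t; exact: nbhs_right_gt.
  rewrite ltr_pdivlMr ?ltr_wpDl //; have := normr_ge0 (d k); nra.
have hpsi : \forall q \near x, psi a d x q < 0.
  have := @near_cont (psi a d x) x (- psi a d x x) (@psi_cont n a d x x).
  rewrite oppr_gt0 => /(_ px); apply: filter_app; near=> q.
  by rewrite ltr_norml; lra.
near=> q t => uq.
have tpos : 0 < t by near: t; exact: nbhs_right_gt.
have Hq : forall k : 'I_n.+1, a k != x -> `|x - q| < `|x - a k| / 2 by near: q.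
have Ht : forall k : 'I_n.+1, a k != x -> t * `|d k| < `|x - a k| / 2 by near: t.
have Hpsi : psi a d x q < 0 by near: q.
have hle : penalty (shift a d t) q <= penalty a q + t * psi a d x q.
  rewrite !penaltyE /psi mulr_sumr -big_split /=; apply: ler_sum => k _.
  rewrite /shift mulrCA -mulrDr; apply: ler_wpM2l; first exact: wt_ge0.
  have [ex|ne] := eqVneq (a k) x.
    have -> : q - (a k + t * d k) = (q - a k) + (- (t * d k)) by ring.
    by rewrite (le_trans (ler_normD _ _)) // normrN normrM gtr0_norm.
  by rewrite (term_bound ne tpos (Hq k ne) (Ht k ne)).
have := pen_le_sup a uq; nra.
Unshelve. all: end_near.
Qed.

Lemma contra_dir n (a d : 'I_n.+1 -> R) : optimal a ->
  (forall k, 0 < d k -> a k < 1) -> (forall k, d k < 0 -> 0 < a k) ->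
  (forall x, absmax (penalty a) x -> psi a d x x < 0) -> False.
Proof.
move=> oa dp dn H; apply: (cover_contra oa dp dn) => x ux.
have := pen_le_sup a ux; rewrite le_eqVlt => /orP[/eqP e|lt].
  by apply: locG => //; apply: H.
exact: locA.
Qed.

Lemma near_ex (x : R) (P : R -> Prop) : (\forall q \near x, P q) ->
  exists2 e : R, 0 < e & forall q, `|x - q| < e -> P q.
Proof. by move/nbhs_normP => [e e0 he]; exists e => // q hq; apply: he. Qed.

Definition sdC (P : {poly R}) (x : R) : R :=
  2 * \sum_(i < size P) `|P^`N(i).[x]|.

Lemma sdC_ge0 P x : 0 <= sdC P x.
Proof. by rewrite /sdC mulr_ge0 // sumr_ge0. Qed.

Lemma e_bound (h : R) i : `|h| <= 1 ->
  `|h ^+ i + (- h) ^+ i - 2 * 0 ^+ i| <= 2 * h ^+ 2.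
Proof.
move=> h1; case: i => [|[|i]].
- have -> : h ^+ 0 + (- h) ^+ 0 - 2 * 0 ^+ 0 = 0 :> R by rewrite !expr0; ring.
  by rewrite normr0 mulr_ge0 // sqr_ge0.
- have -> : h ^+ 1 + (- h) ^+ 1 - 2 * 0 ^+ 1 = 0 :> R by rewrite !expr1; ring.
  by rewrite normr0 mulr_ge0 // sqr_ge0.
rewrite expr0n /= mulr0 subr0.
rewrite (le_trans (ler_normD _ _)) // !normrX normrN.
have : `|h| ^+ i.+2 <= `|h| ^+ 2 by apply: ler_wiXn2l.
rewrite real_normK ?num_real //; lra.
Qed.

Lemma sd_bound (P : {poly R}) x h : `|h| <= 1 ->
  `|P.[x + h] + P.[x - h] - 2 * P.[x]| <= sdC P x * h ^+ 2.
Proof.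
move=> h1.
have c : forall u v : R, GRing.comm u v by move=> u v; exact: mulrC.
rewrite (nderiv_taylor P (c x h)) (nderiv_taylor P (c x (- h))).
have -> : P.[x] = P.[x + 0] by rewrite addr0.
rewrite (nderiv_taylor P (c x 0)).
rewrite big_distrr -!big_split /= -sumrB /sdC big_distrr big_distrl.
apply: (le_trans (ler_norm_sum _ _ _)); apply: ler_sum => i _.
have -> : P^`N(i).[x] * h ^+ i + P^`N(i).[x] * (- h) ^+ i - 2 * (P^`N(i).[x] * 0 ^+ i)
   = P^`N(i).[x] * (h ^+ i + (- h) ^+ i - 2 * 0 ^+ i) by ring.
rewrite normrM /=; have := e_bound i h1; have := normr_ge0 (P^`N(i).[x]); nra.
Qed.

Definition wpoly n k (ak : R) : {poly R} :=
  'C(n, k)%:R *: ('X^k * (1 - 'X) ^+ (n - k) * ('X - ak%:P)).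

Lemma wpolyE n k ak q : (wpoly n k ak).[q] = wt n k q * (q - ak).
Proof. by rewrite /wpoly /wt !hornerE. Qed.

Lemma kink n (a : 'I_n.+1 -> R) i : 0 < a i < 1 -> ~ absmax (penalty a) (a i).
Proof.
move=> /andP[ai0 ai1] [ux fx].
set x := a i in ai0 ai1 ux fx *.
set Cs := \sum_(k < n.+1) sdC (wpoly n k (a k)) x.
have Cs0 : 0 <= Cs by apply: sumr_ge0 => k _; exact: sdC_ge0.
have iln : (i <= n)%N by have := ltn_ord i; rewrite ltnS.
have w0 : 0 < wt n i x by apply: wt_gt0 => //; rewrite ai0 ai1.
have [e1 e10 he1] := near_ex (near_cont (@wt_cont n i x) (divr_gt0 w0 (ltr0Sn _ 1))).
have hev : \forall h \near (0:R)^'+, [/\ 0 < h, h < x, h < 1 - x, h < e1 &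
    (forall k : 'I_n.+1, a k != x -> h < `|x - a k|) /\ h * (Cs + 1) < wt n i x / 2].
  have hk : \forall h \near (0:R)^'+, forall k : 'I_n.+1, a k != x -> h < `|x - a k|.
    apply: (@filter_forall R 'I_n.+1 (fun k (h : R) => a k != x -> h < `|x - a k|) ((0:R)^'+)) => k.
    have [->|ne] := eqVneq (a k) x; first by near=> h.
    near=> h => _; near: h; apply: nbhs_right_lt.
    by rewrite normr_gt0 subr_eq0 eq_sym.
  near=> h; split.
  - by near: h; exact: nbhs_right_gt.
  - by near: h; exact: nbhs_right_lt.
  - by near: h; apply: nbhs_right_lt; rewrite subr_gt0.
  - by near: h; exact: nbhs_right_lt.
  split; first by near: h.
  have : h < wt n i x / 2 / (Cs + 1).
    by near: h; apply: nbhs_right_lt; rewrite !divr_gt0 // ltr_wpDl.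
  by rewrite ltr_pdivlMr // ltr_wpDl.
have [h [h0 hx h1x he [hk hC]]] := filter_ex hev.
have h1 : `|h| <= 1 by rewrite gtr0_norm //; lra.
have uxp : unit_int (x + h) by rewrite /unit_int /=; lra.
have uxm : unit_int (x - h) by rewrite /unit_int /=; lra.
have fp := pen_le_sup a uxp; have fm := pen_le_sup a uxm.
pose L k := (if k == i then h * (wt n i x / 2) else 0) - sdC (wpoly n k (a k)) x * h ^+ 2.
have hL : \sum_(k < n.+1) L k <= penalty a (x + h) + penalty a (x - h) - 2 * penalty a x.
  rewrite !penaltyE big_distrr -big_split -sumrB /=; apply: ler_sum => k _.
  have sd := sdC_ge0 (wpoly n k (a k)) x.
  have sq : 0 <= h ^+ 2 by exact: sqr_ge0.
  have [ek|ne] := eqVneq (a k) x.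
    rewrite /L ek subrr normr0 mulr0 mulr0 subr0.
    have -> : x + h - x = h by ring.
    have -> : x - h - x = - h by ring.
    rewrite normrN gtr0_norm //.
    have wm := wt_ge0 n k uxm; have wp := wt_ge0 n k uxp.
    rewrite ek in sd; case: eqVneq => [ki|_]; last by nra.
    subst k.
    have hw : `|wt n i x - wt n i (x + h)| < wt n i x / 2.
      apply: he1; have -> : x - (x + h) = - h by ring.
      by rewrite normrN gtr0_norm.
    move: hw; rewrite ltr_norml => /andP[_ hw]; nra.
  have kni : (k == i) = false by apply/eqP => ki; move: ne; rewrite ki eqxx.
  rewrite /L kni sub0r.
  have sb := sd_bound (wpoly n k (a k)) x h1; rewrite !wpolyE in sb.
  move: sb; rewrite ler_norml => /andP[sb1 sb2].
  have hk' := hk k ne.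
  have [hax|hax|hax] := ltgtP (a k) x; last by move: ne; rewrite hax eqxx.
    move: hk'; rewrite gtr0_norm ?subr_gt0 // => hk'.
    rewrite !gtr0_norm; first nra. all: try lra.
  move: hk'; rewrite ltr0_norm ?subr_lt0 // => hk'.
  rewrite !ltr0_norm; last by lra. 2: by lra.
  set P1 := wt n k (x + h); set P2 := wt n k (x - h); set P3 := wt n k x.
  have -> : P1 * - (x + h - a k) + P2 * - (x - h - a k) - 2 * (P3 * - (x - a k))
    = - (P1 * (x + h - a k) + P2 * (x - h - a k) - 2 * (P3 * (x - a k))) by ring.
  by rewrite lerN2.
have sL : \sum_(k < n.+1) L k = h * (wt n i x / 2) - Cs * h ^+ 2.
  rewrite /L sumrB (bigD1 i) //= eqxx big1 ?addr0; last by move=> k /negbTE ->.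
  by rewrite /Cs mulr_suml.
move: hL; rewrite sL; nra.
Unshelve. all: end_near.
Qed.

Lemma amin_le n (a : 'I_n.+1 -> R) k : amin a <= a k.
Proof. by rewrite /amin (bigD1 k) //= ge_min lexx. Qed.

Lemma amax_ge n (a : 'I_n.+1 -> R) k : a k <= amax a.
Proof. by rewrite /amax (bigD1 k) //= le_max lexx. Qed.

Lemma amin_ex n (a : 'I_n.+1 -> R) : exists k, amin a = a k.
Proof.
rewrite /amin; elim/big_ind: _ => [|x y [i ->] [j ->]|i _]; first by exists ord0.
  by case: (leP (a i) (a j)) => _; [exists i|exists j].
by exists i.
Qed.

Lemma amax_ex n (a : 'I_n.+1 -> R) : exists k, amax a = a k.
Proof.
rewrite /amax; elim/big_ind: _ => [|x y [i ->] [j ->]|i _]; first by exists ord0.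
  by case: (leP (a i) (a j)) => _; [exists j|exists i].
by exists i.
Qed.

Lemma sum_wt_single n (F : 'I_n.+1 -> R) j :
  (forall k, k != j -> F k = 0) -> \sum_(k < n.+1) F k = F j.
Proof. by move=> h; rewrite (bigD1 j) //= big1 ?addr0 // => k /h. Qed.

Lemma sum_two n (F : 'I_n.+1 -> R) i j : i != j ->
  (forall k, k != i -> k != j -> F k = 0) -> \sum_(k < n.+1) F k = F i + F j.
Proof.
move=> ij h; rewrite (bigD1 i) //= (bigD1 j) 1?eq_sym //= big1 ?addr0 //.
by move=> k /andP[ki kj]; apply: h.
Qed.

Lemma pen_at0 n (a : 'I_n.+1 -> R) : penalty a 0 = `|a ord0|.
Proof.
rewrite penaltyE (@sum_wt_single n _ ord0); first by rewrite wt0 subr0 expr1n mul1r sub0r normrN.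
move=> k k0; rewrite wt_at0 ?mul0r // lt0n; apply: contra k0 => /eqP k0.
by apply/eqP; apply: val_inj.
Qed.

Lemma pen_at1 n (a : 'I_n.+1 -> R) : penalty a 1 = `|1 - a ord_max|.
Proof.
rewrite penaltyE (@sum_wt_single n _ ord_max); first by rewrite wtn expr1n mul1r.
move=> k kn; rewrite wt_at1 ?mul0r //; have := ltn_ord k; rewrite ltnS leq_eqVlt.
by case/orP => // /eqP kn'; move: kn; rewrite -val_eqE /= kn' eqxx.
Qed.

Lemma sup_le_half n (a : 'I_n.+1 -> R) : optimal a -> supnorm01 (penalty a) <= 1 / 2.
Proof.
move=> [_ opt]; have hb : admissible (fun _ : 'I_n.+1 => 1 / 2 : R).
  by move=> k; apply/andP; split; lra.
apply: (le_trans (opt _ hb)); have [c uc [-> _]] := sup_att (fun _ : 'I_n.+1 => 1 / 2 : R).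
rewrite penaltyE; apply: (le_trans (y := \sum_(k < n.+1) wt n k c * (1 / 2))).
  apply: ler_sum => k _; apply: ler_wpM2l; first exact: wt_ge0.
  by move: uc; rewrite /unit_int /= => /andP[c0 c1]; rewrite ler_norml; apply/andP; split; lra.
by rewrite -mulr_suml wt_sum mul1r.
Qed.

Lemma sup_gt0 n (a : 'I_n.+1 -> R) : admissible a -> 0 < supnorm01 (penalty a).
Proof.
move=> ha; have [a00 a01] : 0 <= a ord0 /\ a ord0 <= 1 by move: (ha ord0) => /andP.
have u0 : @unit_int R 0 by rewrite /unit_int /=; lra.
have uh : @unit_int R (1/2) by rewrite /unit_int /=; lra.
have f0 := pen_le_sup a u0; rewrite pen_at0 ger0_norm // in f0.
have [ap|a0] := ltP 0 (a ord0); first by lra.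
have a0e : a ord0 = 0 by lra.
have fh := pen_le_sup a uh; apply: lt_le_trans fh.
rewrite penaltyE (bigD1 ord0) //= a0e subr0.
apply: ltr_pwDl; first by rewrite mulr_gt0 ?normr_gt0 // ?wt_gt0 //; lra.
apply: sumr_ge0 => k _; rewrite mulr_ge0 // wt_ge0 //.
Qed.

Lemma sum_ind n (j : 'I_n.+1) (u : R) :
  \sum_(k < n.+1) (if k == j then u else 0) = u.
Proof.
by rewrite (@sum_wt_single n (fun k => if k == j then u else 0) j) ?eqxx // => k /negbTE ->.
Qed.

Lemma psi_at0 n (a d : 'I_n.+1 -> R) :
  psi a d 0 0 = if a ord0 == 0 then `|d ord0| else - (sgn_at 0 (a ord0) * d ord0).
Proof.
rewrite /psi (@sum_wt_single n _ ord0); first by rewrite wt0 subr0 expr1n mul1r.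
move=> k k0; rewrite wt_at0 ?mul0r // lt0n; apply: contra k0 => /eqP k0.
by apply/eqP; apply: val_inj.
Qed.

Lemma psi_at1 n (a d : 'I_n.+1 -> R) :
  psi a d 1 1 = if a ord_max == 1 then `|d ord_max|
                else - (sgn_at 1 (a ord_max) * d ord_max).
Proof.
rewrite /psi (@sum_wt_single n _ ord_max); first by rewrite wtn expr1n mul1r.
move=> k kn; rewrite wt_at1 ?mul0r //; have := ltn_ord k; rewrite ltnS leq_eqVlt.
by case/orP => // /eqP kn'; move: kn; rewrite -val_eqE /= kn' eqxx.
Qed.

Lemma psi_noeq n (a d : 'I_n.+1 -> R) x : (forall k, a k != x) ->
  psi a d x x = - \sum_(k < n.+1) wt n k x * (sgn_at x (a k) * d k).
Proof.
move=> h; rewrite /psi -sumrN; apply: eq_bigr => k _.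
by rewrite (negbTE (h k)) mulrN.
Qed.

Lemma sgn_lt (x y : R) : y < x -> sgn_at x y = 1.
Proof. by rewrite /sgn_at => ->. Qed.

Lemma sgn_gt (x y : R) : x < y -> sgn_at x y = -1.
Proof. by rewrite /sgn_at => h; rewrite ltNge (ltW h). Qed.

Lemma psi_neg_lb n (a d lb : 'I_n.+1 -> R) x : (forall k, a k != x) ->
  (forall k, lb k <= wt n k x * (sgn_at x (a k) * d k)) ->
  0 < \sum_(k < n.+1) lb k -> psi a d x x < 0.
Proof.
move=> ne hlb hs; rewrite psi_noeq // oppr_lt0; apply: (lt_le_trans hs).
by apply: ler_sum => k _; exact: hlb.
Qed.

Lemma part_min n (a : 'I_n.+1 -> R) : (0 < n)%N -> optimal a ->
  exists x, absmax (penalty a) x /\ x < amin a.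
Proof.
move=> n0 oa; have ha := oa.1.
set m := supnorm01 (penalty a).
have m0 : 0 < m := sup_gt0 ha.
have mh : m <= 1 / 2 := sup_le_half oa.
have adm : forall k, 0 <= a k /\ a k <= 1 by move=> k; move: (ha k) => /andP.
case: (pselect (exists x, absmax (penalty a) x /\ x < amin a)) => // H; exfalso.
have hc : forall x, absmax (penalty a) x -> amin a <= x.
  by move=> x Mx; rewrite leNgt; apply/negP => lt; apply: H; exists x.
have [k0 ek0] := amin_ex a.
have f0 : penalty a 0 = a ord0 by rewrite pen_at0 ger0_norm //; case: (adm ord0).
have f1 : penalty a 1 = 1 - a ord_max.
  by rewrite pen_at1 ger0_norm // subr_ge0; case: (adm ord_max).
have kinkM : forall x k, absmax (penalty a) x -> 0 < x < 1 -> a k != x.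
  by move=> x k Mx x01; apply/eqP => ek; have := @kink n a k; rewrite ek => /(_ x01).
have M1an : absmax (penalty a) 1 -> a ord_max < 1.
  by move=> [_ h]; move: h; rewrite f1 -/m; lra.
have o0n : (ord0 == ord_max :> 'I_n.+1) = false.
  by rewrite -val_eqE /= eq_sym; apply/negbTE; rewrite -lt0n.
set eps := (1 - a ord_max) ^+ n / 2.
have eps0 : 0 <= eps by rewrite /eps divr_ge0 // exprn_ge0 // subr_ge0; case: (adm ord_max).
have epsP : 0 < eps -> a ord_max < 1.
  move=> e0; have [_ an1] := adm ord_max; rewrite lt_neqAle an1 andbT.
  by apply/eqP => e; move: e0; rewrite /eps e subrr expr0n gtn_eqF // mul0r ltxx.
have epsQ : forall x, 0 < x < 1 -> x < a ord_max -> 2 * eps < (1 - x) ^+ n.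
  move=> x /andP[x0 x1] xa; rewrite /eps mulrC divfK ?pnatr_eq0 //.
  have := adm ord_max; case=> _ an1.
  rewrite ltrXn2r ?gtn_eqF // ?subr_ge0 //; lra.
have xn0 : forall x : R, 0 < x -> 0 < x ^+ n by move=> x x0; exact: exprn_gt0.
have ak0ge : 0 <= a k0 by case: (adm k0).
have xle1 : forall x : R, 0 <= x <= 1 -> x ^+ n <= 1.
  by move=> x /andP[x0 x1]; rewrite exprn_ile1.
have wge : forall (k : 'I_n.+1) x, 0 < x < 1 -> x ^+ n * (1 - x) ^+ n <= wt n k x.
  move=> k x /andP[x0 x1]; apply: wt_lb; first by have := ltn_ord k; rewrite ltnS.
  by rewrite ltW // ltW.
have wge0 : forall (k : nat) x, 0 < x < 1 -> 0 <= wt n k x.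
  by move=> k x /andP[x0 x1]; apply: wt_ge0; rewrite ltW // ltW.
have omx : forall x : R, x < 1 -> 0 < (1 - x) ^+ n by move=> x x1; apply: exprn_gt0; lra.
case: (pselect (absmax (penalty a) 0)) => [M0|nM0].
-
  have a0m : a ord0 = m by case: M0 => _; rewrite f0.
  have a0p : 0 < a ord0 by rewrite a0m.
  have ak0 : a k0 = 0 by have := hc 0 M0; rewrite ek0; lra.
  have k0n0 : (k0 == ord0) = false.
    by apply/negbTE; apply: contraTneq a0p => <-; rewrite ak0 ltxx.
  set K := 2 / a ord0 ^+ n.
  have Kp : 0 < K by rewrite /K divr_gt0 // xn0.
  have Ka : K * a ord0 ^+ n = 2 by rewrite /K divfK // expf_neq0 // gt_eqF.
  pose d k := if k == ord0 then -1 else if a k == 0 then K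
              else if k == ord_max then eps else 0.
  apply: (@contra_dir n a d oa).
  + move=> k; rewrite /d; case: eqP => [_|_]; first by lra.
    case: eqP => [->|_]; first by lra.
    case: eqP => [->|_]; first exact: epsP.
    by lra.
  + move=> k; rewrite /d; case: eqP => [-> _|_]; first exact: a0p.
    case: eqP => [_|_]; first by lra.
    by case: eqP => [_|_]; lra.
  move=> x Mx; have [x0 x1] : 0 <= x /\ x <= 1 by case: Mx => /andP.
  have [->|xn0'] := eqVneq x 0.
    rewrite psi_at0 gt_eqF // sgn_gt // /d eqxx; lra.
  have [x1e|xn1] := eqVneq x 1.
    rewrite x1e in Mx *; have an1 := M1an Mx.
    have epsp : 0 < eps by rewrite /eps divr_gt0 // omx.
    rewrite psi_at1 lt_eqF // sgn_lt // /d eq_sym o0n.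
    by case: eqP => _; rewrite ?eqxx mul1r oppr_lt0.
  have x01 : 0 < x < 1 by rewrite lt_neqAle eq_sym xn0' x0 lt_neqAle xn1 x1.
  have xp : 0 < x by case/andP: x01.
  have xl1 : x < 1 by case/andP: x01.
  have ne := fun k => kinkM x k Mx x01.
  set T0 := if a ord0 < x then - (1 - x) ^+ n else (1 - x) ^+ n.
  set N := if a ord_max < x then 0 else - (eps * x ^+ n).
  have N0 : N <= 0 by rewrite /N; case: ifP => _; [lra|]; rewrite oppr_le0 mulr_ge0 // ltW // xn0.
  apply: (@psi_neg_lb n a d (fun k => (if k == ord0 then T0 else 0)
       + (if k == k0 then K * (x ^+ n * (1 - x) ^+ n) else 0)
       + (if k == ord_max then N else 0)) x ne).
    move=> k; rewrite /d.
    have w0 := wge0 k x x01; have wl := wge k x x01.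
    have xx := xn0 x xp; have ox := omx x xl1.
    have [->|kn0] := eqVneq k ord0.
      rewrite eq_sym k0n0 o0n addr0 addr0 wt0 /T0.
      have := ne ord0; case: (ltgtP (a ord0) x) => // h _.
        by rewrite sgn_lt // !mulrN1.
      by rewrite sgn_gt // mulrN1 opprK mulr1.
    rewrite add0r.
    have [ak|akn] := eqVneq (a k) 0.
      rewrite sgn_lt ?ak // mul1r.
      case: eqP => _; case: eqP => _; nra.
    have kk0 : (k == k0) = false by apply/eqP => e; move: akn; rewrite e ak0 eqxx.
    rewrite kk0 add0r.
    case: eqP => [->|_]; last by rewrite mulr0 mulr0.
    rewrite wtn /N; have := ne ord_max; case: (ltgtP (a ord_max) x) => // h _.
      by rewrite sgn_lt // mul1r mulr_ge0 // ltW // xn0.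
    by rewrite sgn_gt // mulN1r mulrN mulrC.
  rewrite !big_split /= !sum_ind.
  have hK : a ord0 < x -> 2 * (1 - x) ^+ n <= K * (x ^+ n * (1 - x) ^+ n).
    move=> h; have : a ord0 ^+ n <= x ^+ n by apply: lerXn2r; rewrite ?nnegrE ?ltW.
    move=> hx; have H1 : 0 <= K * (x ^+ n - a ord0 ^+ n) by apply: mulr_ge0; [exact: ltW|rewrite subr_ge0].
    have := omx x xl1; nra.
  have hN : 0 < (1 - x) ^+ n + N.
    rewrite /N; have := ne ord_max; case: (ltgtP (a ord_max) x) => // h _.
      by rewrite addr0 omx.
    have := epsQ x x01 h; have : x ^+ n <= 1 by rewrite exprn_ile1 // ltW.
    have := xn0 x xp; nra.
  have hK0 : 0 <= K * (x ^+ n * (1 - x) ^+ n).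
    by apply: mulr_ge0; [exact: ltW|apply: mulr_ge0; apply: ltW; [exact: xn0|exact: omx]].
  rewrite /T0; case: ifP => h; last by lra.
  by have := hK h; lra.
-
  have hgt : forall x, absmax (penalty a) x -> amin a < x.
    move=> x Mx; rewrite lt_neqAle hc // andbT; apply/eqP => cx.
    have [ak00 ak01] := adm k0.
    have [c0|cp] := eqVneq (a k0) 0.
      by apply: nM0; rewrite -c0 -ek0 cx.
    have [c1|cl] := eqVneq (a k0) 1.
      have := amin_le a ord_max; rewrite ek0 c1 => an1.
      have [_ _] := adm ord_max; rewrite -cx ek0 c1 in Mx.
      by have := M1an Mx; lra.
    have h01 : 0 < x < 1 by rewrite -cx ek0 lt_neqAle eq_sym cp ak00 lt_neqAle cl ak01.
    by have := kinkM x k0 Mx h01; rewrite -cx ek0 eqxx.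
  have [c' uc' [mc' _]] := sup_att a.
  have Mc' : absmax (penalty a) c' by split => //; rewrite mc'.
  have cl1 : amin a < 1 by have := hgt c' Mc'; case/andP: uc' => _; lra.
  have ck0 : 0 <= amin a by rewrite ek0.
  pose d k := if a k == amin a then 1 else if k == ord_max then eps else 0.
  apply: (@contra_dir n a d oa).
  + move=> k; rewrite /d; case: eqP => [->|_]; first by move=> _.
    case: eqP => [->|_]; first exact: epsP.
    by lra.
  + move=> k; rewrite /d; case: eqP => [_|_]; first by lra.
    by case: eqP => [_|_]; lra.
  move=> x Mx; have [x0 x1] : 0 <= x /\ x <= 1 by case: Mx => /andP.
  have xp : 0 < x by have := hgt x Mx; lra.
  have [x1e|xn1] := eqVneq x 1.
    rewrite x1e in Mx *; have an1 := M1an Mx.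
    have epsp : 0 < eps by rewrite /eps divr_gt0 // omx.
    rewrite psi_at1 lt_eqF // sgn_lt // /d.
    by case: eqP => _; rewrite ?eqxx mul1r oppr_lt0.
  have xl1 : x < 1 by rewrite lt_neqAle xn1 x1.
  have x01 : 0 < x < 1 by rewrite xp xl1.
  have ne := fun k => kinkM x k Mx x01.
  have cx := hgt x Mx.
  set N := if a ord_max < x then 0 else - (eps * x ^+ n).
  have N0 : N <= 0 by rewrite /N; case: ifP => _; [lra|]; rewrite oppr_le0 mulr_ge0 // ltW // xn0.
  apply: (@psi_neg_lb n a d (fun k => (if k == k0 then x ^+ n * (1 - x) ^+ n else 0)
       + (if k == ord_max then N else 0)) x ne).
    move=> k; rewrite /d.
    have w0 := wge0 k x x01; have wl := wge k x x01.
    have xx := xn0 x xp; have ox := omx x xl1.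
    have [ak|akn] := eqVneq (a k) (amin a).
      rewrite sgn_lt ?ak // mulr1.
      by case: eqP => _; case: eqP => _; nra.
    have kk0 : (k == k0) = false by apply/eqP => e; move: akn; rewrite e ek0 eqxx.
    rewrite kk0 add0r.
    case: eqP => [->|_]; last by rewrite mulr0 mulr0.
    rewrite wtn /N; have := ne ord_max; case: (ltgtP (a ord_max) x) => // h _.
      by rewrite sgn_lt // mul1r mulr_ge0 // ltW // xn0.
    by rewrite sgn_gt // mulN1r mulrN mulrC.
  rewrite big_split /= !sum_ind.
  rewrite /N; have := ne ord_max; case: (ltgtP (a ord_max) x) => // h _.
    by rewrite addr0; apply: mulr_gt0; [exact: xn0|exact: omx].
  have := epsQ x x01 h; have := xn0 x xp; nra.
Qed.

Definition refl n (a : 'I_n.+1 -> R) : 'I_n.+1 -> R := fun k => 1 - a (rev_ord k).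

Lemma pen_refl n (a : 'I_n.+1 -> R) p : penalty (refl a) p = penalty a (1 - p).
Proof.
rewrite !penaltyE (reindex_inj rev_ord_inj) /=; apply: eq_bigr => k _.
rewrite /refl rev_ordK /wt /= subSS.
have kn : (k <= n)%N by have := ltn_ord k; rewrite ltnS.
rewrite bin_sub // subKn // (_ : 1 - (1 - p) = p); last by ring.
have -> : p - (1 - a k) = - (1 - p - a k) by ring.
by rewrite normrN; ring.
Qed.

Lemma sup_refl n (a : 'I_n.+1 -> R) :
  supnorm01 (penalty (refl a)) = supnorm01 (penalty a).
Proof.
rewrite /supnorm01; congr sup; apply/seteqP; split => _ [p hp <-].
  exists (1 - p); first by move: hp; rewrite /unit_int /= => /andP[? ?]; apply/andP; split; lra.
  by rewrite pen_refl.
exists (1 - p); first by move: hp; rewrite /unit_int /= => /andP[? ?]; apply/andP; split; lra.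
by rewrite pen_refl (_ : 1 - (1 - p) = p) //; ring.
Qed.

Lemma adm_refl n (a : 'I_n.+1 -> R) : admissible a -> admissible (refl a).
Proof. by move=> ha k; rewrite /refl; have /andP[? ?] := ha (rev_ord k); apply/andP; split; lra. Qed.

Lemma opt_refl n (a : 'I_n.+1 -> R) : optimal a -> optimal (refl a).
Proof.
move=> [ha opt]; split; first exact: adm_refl.
move=> b hb; rewrite sup_refl; have := opt (refl b) (adm_refl hb).
by rewrite sup_refl.
Qed.

Lemma absmax_refl n (a : 'I_n.+1 -> R) x :
  absmax (penalty (refl a)) x -> absmax (penalty a) (1 - x).
Proof.
move=> [ux e]; split; first by move: ux; rewrite /unit_int /= => /andP[? ?]; apply/andP; split; lra.
by rewrite -pen_refl e sup_refl.
Qed.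

Lemma amin_refl n (a : 'I_n.+1 -> R) : amin (refl a) = 1 - amax a.
Proof.
have [k1 e1] := amax_ex a; have [j ej] := amin_ex (refl a).
apply/eqP; rewrite eq_le; apply/andP; split.
  by have := amin_le (refl a) (rev_ord k1); rewrite /refl rev_ordK e1.
by rewrite ej /refl lerD2l lerN2 amax_ge.
Qed.

Lemma part_max n (a : 'I_n.+1 -> R) : (0 < n)%N -> optimal a ->
  exists x, absmax (penalty a) x /\ amax a < x.
Proof.
move=> n0 oa; have [x [Mx lt]] := part_min n0 (opt_refl oa).
exists (1 - x); split; first exact: absmax_refl.
by move: lt; rewrite amin_refl; lra.
Qed.

Lemma a_int n (a : 'I_n.+1 -> R) k : (0 < n)%N -> optimal a -> 0 < a k < 1.
Proof.
move=> n0 oa; have [x [[ux _] lt]] := part_min n0 oa.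
have [y [[uy _] gt]] := part_max n0 oa.
move: ux uy; rewrite /unit_int /= => /andP[x0 _] /andP[_ y1].
have := amin_le a k; have := amax_ge a k.
by move=> h1 h2; apply/andP; split; lra.
Qed.

Lemma part_iii n (a : 'I_n.+1 -> R) : (0 < n)%N -> optimal a ->
  a ord0 <= 1 / 2 <= a ord_max /\
  exists x, absmax (penalty a) x /\ a ord0 < x < a ord_max.
Proof.
move=> n0 oa; have ha := oa.1.
have ai := fun k => a_int k n0 oa.
have mh := sup_le_half oa.
have u0 : @unit_int R 0 by rewrite /unit_int /=; lra.
have u1 : @unit_int R 1 by rewrite /unit_int /=; lra.
have f0 := pen_le_sup a u0; have f1 := pen_le_sup a u1.
rewrite pen_at0 ger0_norm in f0; last by case/andP: (ai ord0) => h _; exact: ltW.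
rewrite pen_at1 ger0_norm in f1; last by case/andP: (ai ord_max) => _ h; rewrite subr_ge0 ltW.
have a0h : a ord0 <= 1 / 2 by lra.
have anh : 1 / 2 <= a ord_max by lra.
split; first by rewrite a0h anh.
case: (pselect (exists x, absmax (penalty a) x /\ a ord0 < x < a ord_max)) => // H.
exfalso.
have o0n : (ord0 == ord_max :> 'I_n.+1) = false.
  by rewrite -val_eqE /= eq_sym; apply/negbTE; rewrite -lt0n.
pose d (k : 'I_n.+1) : R := if k == ord0 then -1 else if k == ord_max then 1 else 0.
have [a00 a01] := andP (ai ord0); have [an0 an1] := andP (ai ord_max).
apply: (@contra_dir n a d oa).
- move=> k; rewrite /d; case: eqP => [_|_]; first by lra.
  by case: eqP => [->|_]; lra.
- move=> k; rewrite /d; case: eqP => [->|_]; first by [].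
  by case: eqP => [_|_]; lra.
move=> x Mx.
have ne : forall k, a k != x.
  by move=> k; apply/eqP => e; apply: (@kink n a k (ai k)); rewrite e.
have [x0 x1] : 0 <= x /\ x <= 1 by case: Mx => /andP.
rewrite psi_noeq // (@sum_two n _ ord0 ord_max); last first.
- by move=> k k0 kn; rewrite /d (negbTE k0) (negbTE kn) !mulr0.
- by rewrite o0n.
rewrite /d eqxx eq_sym o0n eqxx wt0 wtn.
have nx : ~ (a ord0 < x < a ord_max) by move=> h; apply: H; exists x.
have [xl|xg] : x < a ord0 \/ a ord_max < x.
  have := ne ord0; have := ne ord_max.
  case: (ltgtP (a ord0) x) => h0; case: (ltgtP (a ord_max) x) => hn //; try by [left|right].
  by exfalso; apply: nx; rewrite h0 hn.
- rewrite sgn_gt // sgn_gt; last by lra.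
  have : x ^+ n < (1 - x) ^+ n by rewrite ltrXn2r ?gtn_eqF //; lra.
  lra.
- rewrite sgn_lt; last by lra.
  rewrite sgn_lt //.
  have : (1 - x) ^+ n < x ^+ n by rewrite ltrXn2r ?gtn_eqF //; lra.
  lra.
Qed.

End Basics.

Unset Implicit Arguments.

Theorem lemma2p1 (R : realType) (n : nat) (a : 'I_n.+1 -> R) :
  (0 < n)%N -> optimal a ->
  let M := absmax (penalty a) in
  (forall i : 'I_n.+1, ~ M (a i)) /\
  ((exists x, M x /\ x < amin a) /\ (exists x, M x /\ amax a < x)) /\
  (a ord0 <= 1 / 2 <= a ord_max /\ exists x, M x /\ a ord0 < x < a ord_max).
Proof.
move=> n0 oa M; split.
  by move=> i; apply: kink; exact: a_int.
split; last exact: part_iii.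
by split; [exact: part_min|exact: part_max].
Qed.
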